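(* Let $n\in\mathbb N$, $\psi_1,\dots,\psi_n\in\bar P_0\mathcal H$ and $E_1,\dots,E_n\in\mathbb C$ be such that $E_1=\langle\psi_0,V\psi_0\rangle$, for all $2\le m\le n$ $$E_m=-\sum_{k=2}^{m}\sum_{\substack{j_1+\dots+j_k=m\\ j_s\ge1}}\Big\langle\psi_0,(E_{j_1}-\delta_{1j_1}V)\prod_{s=2}^{k}\Big\{(H_0-E_0)^{-1}\bar P_0(E_{j_s}-\delta_{1j_s}V)\Big\}\psi_0\Big\rangle,$$ and for all $1\le m\le n$ $$\psi_m=\sum_{k=1}^{m}\sum_{\substack{j_1+\dots+j_k=m\\ j_s\ge1}}\prod_{s=1}^{k}\Big\{(H_0-E_0)^{-1}\bar P_0(E_{j_s}-\delta_{1j_s}V)\Big\}\psi_0,$$ where it is assumed that all expressions on the right-hand sides are well defined (every vector to which $V$ is applied lies in ${\rm dom}(V)$, every vector to which $(H_0-E_0)^{-1}\bar P_0$ is applied lies in its domain). Then for all $m\in\{1,\dots,n\}$ $$H_0\psi_m+V\psi_{m-1}=\sum_{k=0}^{m}E_k\psi_{m-k}.$$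
   Context: Let $H_0$ and $V$ be self-adjoint operators in a Hilbert space $\mathcal H$ with $V$ $H_0$-bounded, and let $\psi_0$ be a normalized vector with $H_0\psi_0=E_0\psi_0$ and $\ker(H_0-E_0)=\mathbb C\psi_0$. $P_0$ is the orthogonal projection onto $\mathbb C\psi_0$, $\bar P_0=1-P_0$. The operator $(H_0-E_0)^{-1}\bar P_0$ maps a vector $\xi$ to the unique $\chi\in{\rm dom}(H_0)\cap\bar P_0\mathcal H$ with $(H_0-E_0)\chi=\bar P_0\xi$; its domain consists of those $\xi$ for which such $\chi$ exists. $\delta_{ij}$ is the Kronecker delta. *)

(* Defs.v *)
From HB Require Import structures.
From mathcomp Require Import all_boot all_order all_algebra.
From Stdlib Require Import ClassicalEpsilon.
Set Implicit Arguments. Unset Strict Implicit. Unset Printing Implicit Defensive.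
Import Order.TTheory GRing.Theory Num.Theory.
Local Open Scope ring_scope.

(* Complex Hilbert space: an lmodType V over a numeric closed field C   *)
(* (the complex numbers), with an inner product <.,.> antilinear in    *)
(* the first and linear in the second argument (physics convention),   *)

Section Hilbert.
Variables (C : numClosedFieldType) (V : lmodType C).
Variable ip : V -> V -> C.

Definition inner_product_axioms : Prop :=
  [/\ (forall x y, ip x y = (ip y x)^*),
      (forall a x y z, ip x (a *: y + z) = a * ip x y + ip x z),
      (forall x, 0 <= ip x x) &
      (forall x, ip x x = 0 -> x = 0)].

Definition hnorm (x : V) : C := sqrtC (ip x x).

Definition cauchy_seq (u : nat -> V) : Prop :=
  forall eps : C, 0 < eps -> exists N, forall p q, (N <= p)%N -> (N <= q)%N ->
    hnorm (u p - u q) < eps.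

Definition converges_to (u : nat -> V) (l : V) : Prop :=
  forall eps : C, 0 < eps -> exists N, forall p, (N <= p)%N -> hnorm (u p - l) < eps.

Definition complete : Prop :=
  forall u, cauchy_seq u -> exists l, converges_to u l.

Definition hilbert_space : Prop := inner_product_axioms /\ complete.

(* Partially defined operators: a domain and an action (only meaningful on the domain). *)
Record pop := POp { dom : V -> Prop; app : V -> V }.

Definition linear_op (T : pop) : Prop :=
  [/\ dom T 0,
      (forall x y, dom T x -> dom T y -> dom T (x + y) /\ app T (x + y) = app T x + app T y) &
      (forall a x, dom T x -> dom T (a *: x) /\ app T (a *: x) = a *: app T x)].

Definition dense (D : V -> Prop) : Prop :=
  forall x (eps : C), 0 < eps -> exists d, D d /\ hnorm (x - d) < eps.

(* T is self-adjoint: densely defined linear operator with T^* = T, where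
   y \in dom T^* with T^* y = z  iff  <T x, y> = <x, z> for all x \in dom T. *)
Definition self_adjoint (T : pop) : Prop :=
  [/\ linear_op T, dense (dom T) &
      forall y z, (forall x, dom T x -> ip (app T x) y = ip x z) <->
                  (dom T y /\ z = app T y)].

Definition rel_bounded (W H : pop) : Prop :=
  (forall x, dom H x -> dom W x) /\
  exists a b : C, [/\ 0 <= a, 0 <= b &
    forall x, dom H x -> hnorm (app W x) <= a * hnorm (app H x) + b * hnorm x].

Variables (H0 W : pop) (psi0 : V) (E0 : C).

Definition P0 (x : V) : V := ip psi0 x *: psi0.
Definition Pbar0 (x : V) : V := x - P0 x.

(* chi = (H0 - E0)^{-1} Pbar0 xi *)
Definition Rres (xi chi : V) : Prop :=
  [/\ dom H0 chi, Pbar0 chi = chi & app H0 chi - E0 *: chi = Pbar0 xi].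

Definition pdec (P : Prop) : {P} + {~ P} := excluded_middle_informative P.

(* (H0 - E0)^{-1} Pbar0 as a partial function (None outside its domain). *)
Definition Rinv (xi : V) : option V :=
  match pdec (exists chi, Rres xi chi) with
  | left h => Some (proj1_sig (constructive_indefinite_description _ h))
  | right _ => None
  end.

Variable E : nat -> C.

(* (E_j - delta_{1j} V) x, None if V is applied outside its domain. *)
Definition Bop (j : nat) (x : V) : option V :=
  if j == 1%N then
    (if pdec (dom W x) then Some (E 1 *: x - app W x) else None)
  else Some (E j *: x).

(* (H0 - E0)^{-1} Pbar0 (E_j - delta_{1j} V) *)
Definition Aop (j : nat) (x : V) : option V := obind Rinv (Bop j x).

(* prod_{s=1}^k A_{j_s} x  =  A_{j_1} (A_{j_2} ( ... A_{j_k} x)) *)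
Definition chain (js : seq nat) (x : V) : option V :=
  foldr (fun j o => obind (Aop j) o) (Some x) js.

(* (E_{j_1} - delta V) prod_{s=2}^k A_{j_s} psi0 *)
Definition termE (js : seq nat) : option V :=
  match js with
  | j1 :: rest => obind (Bop j1) (chain rest psi0)
  | [::] => None
  end.

End Hilbert.

Definition is_comp (m : nat) (s : seq nat) : bool :=
  all (fun j => 0 < j)%N s && (sumn s == m).

(* Main.v *)
Require Import Defs.
From HB Require Import structures.
From mathcomp Require Import all_boot all_order all_algebra zify.
From Stdlib Require Import ClassicalEpsilon.
Import Order.TTheory GRing.Theory Num.Theory.
Local Open Scope ring_scope.
Set Implicit Arguments. Unset Strict Implicit.

Section Comb.
Variable R : zmodType.

Fixpoint Lc (k r : nat) (F : seq nat -> R) : R :=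
  match k with
  | 0%N => if r == 0%N then F [::] else 0
  | k'.+1 => \sum_(1 <= j < r.+1) Lc k' (r - j) (fun s => F (j :: s))
  end.

Lemma sum_tuple0 (T : finType) (h : 0.-tuple T -> R) :
  \sum_(t : 0.-tuple T) h t = h [tuple].
Proof.
rewrite (eq_bigr (fun _ => h [tuple])); last by move=> t _; rewrite tuple0.
by rewrite sumr_const card_tuple expn0.
Qed.

Lemma sum_tupleS (T : finType) k (h : k.+1.-tuple T -> R) :
  \sum_(t : k.+1.-tuple T) h t = \sum_(x : T) \sum_(t : k.-tuple T) h [tuple of x :: t].
Proof.
rewrite pair_big /=.
rewrite (reindex (fun p : T * k.-tuple T => [tuple of p.1 :: p.2])) //=.
exists (fun t => (thead t, [tuple of behead t])).
  by move=> [x t] _ /=; congr pair; apply: val_inj.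
by move=> t _; apply: val_inj; rewrite /= [t]tuple_eta.
Qed.

Lemma is_comp_cons r x s :
  is_comp r (x :: s) = [&& (0 < x)%N, (x <= r)%N & is_comp (r - x) s].
Proof.
rewrite /is_comp /=.
case: (0 < x)%N => //=; case: (all _ s) => /=; last by rewrite !andbF.
apply/eqP/andP => [<-|[H /eqP ->]]; first by split; [rewrite leq_addr|rewrite addKn].
by rewrite subnKC.
Qed.

Lemma bridge (F : seq nat -> R) N k r : (r < N)%N ->
  \sum_(t : k.-tuple 'I_N | is_comp r (map val t)) F (map val t) = Lc k r F.
Proof.
elim: k r F => [|k IH] r F rN.
  rewrite big_mkcond sum_tuple0 /= /is_comp /=.
  by case: (r =P 0%N) => [->|/eqP]; [|rewrite eq_sym => /negbTE ->].
rewrite big_mkcond sum_tupleS /=.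
transitivity (\sum_(x : 'I_N) (if ((0 < x)%N && (x <= r)%N) then Lc k (r - x) (fun s => F (val x :: s)) else 0)).
  apply: eq_bigr => x _.
  case: ifP => Hx.
    rewrite -IH; last by rewrite (leq_ltn_trans (leq_subr _ _)).
    rewrite [RHS]big_mkcond; apply: eq_bigr => t _ /=.
    by rewrite is_comp_cons; case/andP: Hx => -> ->.
  by apply: big1 => t _; rewrite is_comp_cons andbA Hx.
rewrite -(big_mkord xpredT (fun x : nat => if ((0 < x)%N && (x <= r)%N) then Lc k (r - x) (fun s => F (x :: s)) else 0)).
rewrite big_ltn ?(leq_ltn_trans (leq0n r) rN) //= add0r.
rewrite (big_nat_widen 1 r.+1 N) // [RHS]big_mkcond /=.
by apply: eq_big_nat => i /andP [Hi _]; rewrite Hi ltnS.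
Qed.

Lemma Lc_gt k r F : (r < k)%N -> Lc k r F = 0.
Proof.
elim: k r F => [|k IH] r F //= rk.
rewrite big_nat_cond big1 // => j /andP [/andP [Hj1 Hj2] _].
apply: IH; lia.
Qed.

Definition Tot r F := \sum_(0 <= k < r.+1) Lc k r F.

Lemma Tot0 F : Tot 0 F = F [::].
Proof. by rewrite /Tot big_nat1. Qed.

Lemma Lc_eq k r F G : (forall s, is_comp r s -> F s = G s) -> Lc k r F = Lc k r G.
Proof.
elim: k r F G => [|k IH] r F G H /=.
  by case: r H => [|r] H //=; rewrite H.
apply: eq_big_nat => j /andP [Hj1 Hj2]; apply: IH => s Hs.
apply: H; rewrite is_comp_cons Hs Hj1 andbT; lia.
Qed.

Lemma Tot_eq r F G : (forall s, is_comp r s -> F s = G s) -> Tot r F = Tot r G.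
Proof. by move=> H; apply: eq_bigr => k _; apply: Lc_eq. Qed.

Lemma Tot_rec r F : (0 < r)%N ->
  Tot r F = \sum_(1 <= j < r.+1) Tot (r - j) (fun s => F (j :: s)).
Proof.
move=> r0; rewrite /Tot big_ltn // /= ifN ?add0r; last by rewrite -lt0n.
rewrite big_add1 /= exchange_big_nat /=.
apply: eq_big_nat => j /andP [Hj1 Hj2].
rewrite (big_cat_nat (n := (r - j).+1)) /=; [|done|lia].
rewrite [X in _ + X]big_nat_cond [X in _ + X]big1 ?addr0 // => k /andP [/andP [Hk _] _].
apply: Lc_gt; lia.
Qed.

Lemma Lc1 r F : (0 < r)%N -> Lc 1 r F = F [:: r].
Proof.
move=> r0 /=; rewrite big_nat_recr /=; last by [].
rewrite subnn /= big_nat_cond big1 ?add0r // => j /andP [/andP [Hj1 Hj2] _].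
by rewrite ifN //; lia.
Qed.
End Comb.

Section Map.
Variables (R1 R2 : zmodType) (D : R1 -> Prop) (f : R1 -> R2).
Hypotheses (D0 : D 0) (f0 : f 0 = 0)
  (fD : forall x y, D x -> D y -> D (x + y) /\ f (x + y) = f x + f y).

Lemma sum_map (l : seq nat) (G : nat -> R1) : (forall i, i \in l -> D (G i)) ->
  D (\sum_(i <- l) G i) /\ f (\sum_(i <- l) G i) = \sum_(i <- l) f (G i).
Proof.
elim: l => [|i l IH] H; first by rewrite !big_nil.
rewrite !big_cons.
have [H1 H2] := IH (fun j Hj => H j (mem_behead (s := i :: l) Hj)).
have Hi := H i (mem_head _ _).
have [H3 H4] := fD Hi H1.
by rewrite H4 H2.
Qed.

Lemma Lc_map k r F : (forall s, is_comp r s -> D (F s)) ->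
  D (Lc k r F) /\ f (Lc k r F) = Lc k r (fun s => f (F s)).
Proof.
elim: k r F => [|k IH] r F H /=.
  by case: r H => [|r] H //=; split => //; apply: H.
have IH' : forall j, j \in index_iota 1 r.+1 ->
  D (Lc k (r - j) (fun s => F (j :: s))) /\
  f (Lc k (r - j) (fun s => F (j :: s))) = Lc k (r - j) (fun s => f (F (j :: s))).
  move=> j; rewrite mem_iota => /andP [Hj1 Hj2]; apply: IH => s Hs.
  apply: H; rewrite is_comp_cons Hs Hj1 andbT; lia.
have [H1 H2] := sum_map (fun j Hj => proj1 (IH' j Hj)).
split => //; rewrite H2 !big_seq; apply: eq_bigr => j Hj.
exact: proj2 (IH' j Hj).
Qed.

Lemma Tot_map r F : (forall s, is_comp r s -> D (F s)) ->
  D (Tot r F) /\ f (Tot r F) = Tot r (fun s => f (F s)).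
Proof.
move=> H; have [H1 H2] := sum_map (G := fun k => Lc k r F) (l := index_iota 0 r.+1)
  (fun k _ => proj1 (Lc_map k H)).
split => //; rewrite /Tot H2; apply: eq_bigr => k _; exact: proj2 (Lc_map k H).
Qed.
End Map.


Lemma sumn_size s : all (fun j => 0 < j)%N s -> (size s <= sumn s)%N.
Proof. elim: s => //= x s IH /andP [Hx Hs]; have := IH Hs; lia. Qed.

Lemma comp_tuple m s : is_comp m s ->
  exists t : (size s).-tuple 'I_m.+1, map val t = s.
Proof.
case/andP => _ /eqP Hs.
have Hle : forall x, x \in s -> (x < m.+1)%N.
  move=> x Hx; rewrite ltnS -Hs; elim: (s) Hx => //= y l IH.
  by rewrite in_cons => /orP [/eqP ->|/IH]; [rewrite leq_addr | lia].
exists (map_tuple (fun x => inord x) (in_tuple s)) => /=.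
rewrite -map_comp -[RHS]map_id; apply/eq_in_map => x Hx /=.
by rewrite inordK // Hle.
Qed.

Section Help.
Variables (C : numClosedFieldType) (V : lmodType C) (ip : V -> V -> C)
  (H0 W : pop V) (psi0 : V) (E0 : C) (E : nat -> C).

Lemma Rinv_spec xi c : Rinv ip H0 psi0 E0 xi = Some c -> Rres ip H0 psi0 E0 xi c.
Proof.
rewrite /Rinv; case: pdec => // h [<-].
exact: proj2_sig (constructive_indefinite_description _ h).
Qed.

Lemma step j rest :
  chain ip H0 W psi0 E0 E (j :: rest) psi0 <> None ->
  exists y b c, [/\ chain ip H0 W psi0 E0 E rest psi0 = Some y,
    termE ip H0 W psi0 E0 E (j :: rest) = Some b &
    chain ip H0 W psi0 E0 E (j :: rest) psi0 = Some c] /\ [/\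
    Rres ip H0 psi0 E0 b c,
    b = E j *: y - (if j == 1%N then app W y else 0) &
    (j == 1%N -> dom W y)].
Proof.
rewrite /=; case: (chain _ _ _ _ _ _ rest psi0) => [y|] //= .
rewrite /Aop /Bop /termE /=.
set B := (if j == 1%N then _ else _).
case HBe: B => [b|] //= Hne.
case Hc: (Rinv ip H0 psi0 E0 b) Hne => [c|] // _.
exists y, b, c; split => //; split; first exact: Rinv_spec.
  move: HBe; rewrite /B; case: (j =P 1%N) => [->|] //=; last by move=> _ [<-]; rewrite subr0.
  by case: pdec => //= _ [<-].
move: HBe; rewrite /B; case: (j =P 1%N) => //= _.
by case: pdec.
Qed.
End Help.

Unset Implicit Arguments. Set Strict Implicit.

Theorem mainTheorem5 (C : numClosedFieldType) (V : lmodType C) (ip : V -> V -> C)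
  (H0 W : pop V) (E : nat -> C) (psi : nat -> V) (n : nat) :
  hilbert_space ip ->
  self_adjoint ip H0 -> self_adjoint ip W -> rel_bounded ip W H0 ->
  (* psi 0 is a normalized, nondegenerate eigenvector of H0 with eigenvalue E 0 *)
  ip (psi 0%N) (psi 0%N) = 1 ->
  dom H0 (psi 0%N) -> app H0 (psi 0%N) = E 0%N *: psi 0%N ->
  (forall x, dom H0 x -> app H0 x = E 0%N *: x -> exists c : C, x = c *: psi 0%N) ->
  (* psi_1, ..., psi_n lie in Pbar0 H *)
  (forall m, (1 <= m <= n)%N -> Pbar0 ip (psi 0%N) (psi m) = psi m) ->
  (* all right-hand side expressions are well defined *)
  (forall m k (t : k.-tuple 'I_m.+1), (1 <= m <= n)%N -> (1 <= k <= m)%N ->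
     is_comp m (map val t) ->
     chain ip H0 W (psi 0%N) (E 0%N) E (map val t) (psi 0%N) <> None) ->
  (forall m k (t : k.-tuple 'I_m.+1), (2 <= m <= n)%N -> (2 <= k <= m)%N ->
     is_comp m (map val t) ->
     termE ip H0 W (psi 0%N) (E 0%N) E (map val t) <> None) ->
  (* the recursive definitions *)
  (1 <= n)%N -> E 1%N = ip (psi 0%N) (app W (psi 0%N)) ->
  (forall m, (2 <= m <= n)%N ->
     E m = - \sum_(2 <= k < m.+1)
              \sum_(t : k.-tuple 'I_m.+1 | is_comp m (map val t))
                 ip (psi 0%N) (odflt 0 (termE ip H0 W (psi 0%N) (E 0%N) E (map val t)))) ->
  (forall m, (1 <= m <= n)%N ->
     psi m = \sum_(1 <= k < m.+1)
              \sum_(t : k.-tuple 'I_m.+1 | is_comp m (map val t))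
                 odflt 0 (chain ip H0 W (psi 0%N) (E 0%N) E (map val t) (psi 0%N))) ->
  forall m, (1 <= m <= n)%N ->
    dom H0 (psi m) /\
    app H0 (psi m) + app W (psi m.-1) = \sum_(0 <= k < m.+1) E k *: psi (m - k)%N.
Proof.
move=> [[ipC ipL ipP ipDef] _] [[H0d0 H0add H0sc] _ _] [[Wd0 Wadd Wsc] _ _] [WH _]
  ip00 dH0 H0eig _ Pbar Hdef _ n1 E1 Erec psiRec.
set psi0 := psi 0%N in ip00 dH0 H0eig Pbar Hdef E1 Erec psiRec *.
pose ch s := odflt 0 (chain ip H0 W psi0 (E 0%N) E s psi0).
pose b s := odflt 0 (termE ip H0 W psi0 (E 0%N) E s).
have ip0 x : ip x 0 = 0.
  have := ipL 1 x 0 0; rewrite scale1r addr0 mul1r => H.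
  by apply: (addrI (ip x 0)); rewrite addr0 -H.
have ipD x y z : ip x (y + z) = ip x y + ip x z by rewrite -{1}[y]scale1r ipL mul1r.
have ipZ x a y : ip x (a *: y) = a * ip x y by rewrite -[a *: y]addr0 ipL ip0 addr0.
have H0_0 : app H0 0 = 0 by have [_] := H0sc 0 0 H0d0; rewrite !scale0r.
have W_0 : app W 0 = 0 by have [_] := Wsc 0 0 Wd0; rewrite !scale0r.
have psiTot i : (i <= n)%N -> psi i = Tot i ch.
  case: i => [|i] Hi; first by rewrite Tot0.
  rewrite psiRec ?Hi // /Tot [RHS]big_ltn //= add0r.
  by apply: eq_bigr => k _; apply: (bridge ch).
have Hdef' i s : (1 <= i <= n)%N -> is_comp i s ->
    chain ip H0 W psi0 (E 0%N) E s psi0 <> None.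
  move=> Hi Hs; have [t Ht] := comp_tuple Hs.
  have Hk : (1 <= size s <= i)%N.
    case/andP: (Hs) => Ha /eqP Hsum; apply/andP; split.
      by case: (s) Hsum Hi => [|x l] //= <-.
    by rewrite -Hsum sumn_size.
  by move: (Hdef i (size s) t Hi Hk); rewrite Ht; apply.
have fact q j rest : (1 <= q <= n)%N -> is_comp q (j :: rest) ->
   [/\ dom H0 (ch (j :: rest)),
       app H0 (ch (j :: rest)) - E 0%N *: ch (j :: rest) = Pbar0 ip psi0 (b (j :: rest)),
       b (j :: rest) = E j *: ch rest - (if j == 1%N then app W (ch rest) else 0) &
       (j == 1%N -> dom W (ch rest))].
  move=> Hi Hs; have [y [bb [c [[Hy Hb Hc] [HR Hbb HW]]]]] := step (Hdef' _ _ Hi Hs).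
  rewrite /ch /b Hy Hb Hc /=; case: HR => Hd _ Heq; split => //.
move=> m Hm.
have m0 : (0 < m)%N by case/andP: Hm.
have comp_ne q s : (0 < q)%N -> is_comp q s -> exists j rest, s = j :: rest.
  case: s => [|j rest] q0 Hs; last by exists j, rest.
  by move: Hs q0; rewrite /is_comp /= => /eqP <-.
have orth i : (1 <= i <= n)%N -> ip psi0 (psi i) = 0.
  move=> Hi; have := Pbar i Hi; rewrite /Pbar0 /P0 => H.
  have := ipD psi0 (psi i) (- (ip psi0 (psi i) *: psi0)).
  rewrite H -scaleNr ipZ ip00 mulr1 => /eqP; rewrite -subr_eq0 opprD addrA subrr sub0r opprK.
  by move/eqP.
have PbarD x y : Pbar0 ip psi0 (x + y) = Pbar0 ip psi0 x + Pbar0 ip psi0 y.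
  by rewrite /Pbar0 /P0 ipD scalerDl opprD addrACA.
have Pbar_0 : Pbar0 ip psi0 0 = 0 by rewrite /Pbar0 /P0 ip0 scale0r subr0.
have Dch s : is_comp m s -> dom H0 (ch s).
  move=> Hs; have [j [rest Hjr]] := comp_ne _ _ m0 Hs; subst s.
  by case: (fact _ _ _ Hm Hs).
have fadd x y : dom H0 x -> dom H0 y -> dom H0 (x + y) /\
    app H0 (x + y) - E 0%N *: (x + y) = (app H0 x - E 0%N *: x) + (app H0 y - E 0%N *: y).
  move=> Hx Hy; have [Hd ->] := H0add x y Hx Hy; split => //.
  by rewrite scalerDr opprD addrACA.
have f0 : app H0 0 - E 0%N *: 0 = 0 by rewrite H0_0 scaler0 subr0.
have [DX HX1] := Tot_map (D := dom H0) (f := fun x => app H0 x - E 0%N *: x) H0d0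
  f0 fadd Dch.
rewrite -psiTot in DX HX1; last by case/andP: Hm.
have HX2 : app H0 (psi m) - E 0%N *: psi m = Pbar0 ip psi0 (Tot m b).
  rewrite HX1 (Tot_eq (G := fun s => Pbar0 ip psi0 (b s))); last first.
    move=> s Hs; have [j [rest Hjr]] := comp_ne _ _ m0 Hs; subst s.
    by case: (fact _ _ _ Hm Hs).
  have [_ ->] := Tot_map (D := xpredT) (f := Pbar0 ip psi0) (F := b) (r := m) erefl Pbar_0
    (fun x y _ _ => conj erefl (PbarD x y)) (fun _ _ => erefl).
  done.
have HX : Tot m b = \sum_(1 <= j < m.+1) E j *: psi (m - j)%N - app W (psi (m - 1)%N).
  rewrite Tot_rec //.
  transitivity (\sum_(1 <= j < m.+1) (E j *: psi (m - j)%N -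
      (if j == 1%N then app W (psi (m - j)%N) else 0))).
    apply: eq_big_nat => j /andP [Hj1 Hj2].
    pose fj x := E j *: x - (if j == 1%N then app W x else 0).
    have Hs r : is_comp (m - j) r -> is_comp m (j :: r).
      by move=> Hr; rewrite is_comp_cons Hr Hj1 andbT; lia.
    rewrite (Tot_eq (G := fun r => fj (ch r))); last first.
      by move=> r Hr; case: (fact _ _ _ Hm (Hs r Hr)).
    have Dj r : is_comp (m - j) r -> (j == 1%N -> dom W (ch r)).
      by move=> Hr; case: (fact _ _ _ Hm (Hs r Hr)).
    have D0 : j == 1%N -> dom W 0 by move=> _.
    have fj0 : fj 0 = 0 by rewrite /fj scaler0 W_0 if_same subr0.
    have fjD x y : (j == 1%N -> dom W x) -> (j == 1%N -> dom W y) ->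
        (j == 1%N -> dom W (x + y)) /\ fj (x + y) = fj x + fj y.
      rewrite /fj; case: (j == 1%N) => Hx Hy.
        have [Hd ->] := Wadd _ _ (Hx erefl) (Hy erefl).
        by split; [move=> _ | rewrite scalerDr opprD addrACA].
      by split => //; rewrite !subr0 scalerDr.
    have [_ <-] := Tot_map D0 fj0 fjD Dj.
    by rewrite -psiTot //; lia.
  rewrite sumrB; congr (_ - _).
  rewrite big_ltn // eqxx big_nat_cond big1 ?addr0 // => j /andP [/andP [Hj _] _].
  by rewrite ifN //; lia.
have ipN x y : ip x (- y) = - ip x y by rewrite -scaleN1r ipZ mulN1r.
have ipTot F r : ip psi0 (Tot r F) = Tot r (fun s => ip psi0 (F s)).
  by have [_ ->] := Tot_map (D := xpredT) (f := ip psi0) (F := F) (r := r) erefl (ip0 psi0)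
    (fun x y _ _ => conj erefl (ipD psi0 x y)) (fun _ _ => erefl).
have ipX : ip psi0 (Tot m b) = E m - ip psi0 (app W (psi (m - 1)%N)).
  rewrite HX ipD ipN; congr (_ - _).
  have [_ ->] := sum_map (D := xpredT) (f := ip psi0) (G := fun j => E j *: psi (m - j)%N)
    (l := index_iota 1 m.+1) erefl (ip0 psi0)
    (fun x y _ _ => conj erefl (ipD psi0 x y)) (fun _ _ => erefl).
  rewrite big_nat_recr //= ipZ subnn ip00 mulr1 big_nat_cond big1 ?add0r //.
  move=> j /andP [/andP [Hj1 Hj2] _]; rewrite ipZ orth ?mulr0 //; lia.
have Em : E m = ip psi0 (app W (psi (m - 1)%N)).
  case: (ltnP 1 m) => Hm2; last first.
    by have -> : m = 1%N by lia.
  have Gm : ip psi0 (b [:: m]) = E m.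
    have Hs : is_comp m [:: m] by rewrite /is_comp /= addn0 m0 eqxx.
    case: (fact _ _ _ Hm Hs) => _ _ -> _.
    by rewrite ifN; [rewrite subr0 ipZ /ch /= ip00 mulr1 | lia].
  have Hm2n : (2 <= m <= n)%N by lia.
  rewrite Erec //.
  rewrite (eq_bigr (fun k => Lc k m (fun s => ip psi0 (b s)))); last first.
    by move=> k _; apply: (bridge (fun s => ip psi0 (b s))).
  have H := ipTot b m; rewrite ipX /Tot big_ltn // big_ltn // Lc1 // Gm in H.
  rewrite /= ifN in H; last by lia.
  by move: H; rewrite add0r => /addrI <-; rewrite opprK.
split => //.
move: HX2; rewrite /Pbar0 /P0 ipX Em subrr scale0r subr0 HX => /eqP; rewrite subr_eq => /eqP ->.
by rewrite [RHS]big_ltn // subn0 -subn1 addrAC subrK addrC.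
Qed.
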